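(* Let $p=2$ and let $\chi=\mathfrak{Z}_5+2\mathfrak{Z}_{15}$, a character $U_1\to\mathbb{Z}/4\mathbb{Z}$ of type $\langle5,15\rangle$ in reduced form (so $\chi(E_{11})=0$). Then $\chi$ is strictly equivalent to a character $\psi$ in reduced form of type $\langle 5,15\rangle$, i.e. $\psi=\mathfrak{Z}_5+\sum_{10\le j\le15,\,j\text{ odd}}b_j\cdot 2\,\mathfrak{Z}_j$ with $b_j\in\{0,1\}$, $b_{15}=1$, such that $\psi(E_{11})=2$; in particular $\psi\neq\chi$, so the uniqueness of reduced forms in a strict equivalence class fails when $l\ge p$.
   Context: Here $p=2$, $U_1=1+t\mathbb{F}_2[[t]]$, $U_j=1+t^j\mathbb{F}_2[[t]]$, with the $t$-adic topology. The Nottingham group $\mathcal{N}$ over $\mathbb{F}_2$ is the set of power series $u(t)=t(1+c_1t+\cdots)$, $c_i\in\mathbb{F}_2$, under composition. A character is a continuous homomorphism $\chi:U_1\to\mathbb{Z}/4\mathbb{Z}$; $\mathcal{N}$ acts by ${}_u\chi(f(t))=\chi(f(u(t)))$. Characters $\chi,\psi$ are strictly equivalent if $\psi={}_u\chi$ for some $u\in\mathcal{N}$ with $\chi(u(t)/t)=0$. A surjective character has type $\langle l,m\rangle$ where $l$ is the largest $b$ with $\chi(U_b)\not\subset 2\mathbb{Z}/4\mathbb{Z}$ and $m$ the largest $b$ with $\chi(U_b)\ne0$. Put $E_j=1+t^j$; the $E_j$ with $j$ odd form a topological $\mathbb{Z}_2$-basis of $U_1$, and for odd $j$, $\mathfrak{Z}_j$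 is the character with $\mathfrak{Z}_j(E_i)=\delta_{ij}$ for all odd $i$. *)

(* Defs.v *)
From HB Require Import structures.
From mathcomp Require Import all_boot all_order all_algebra.
Set Implicit Arguments. Unset Strict Implicit. Unset Printing Implicit Defensive.
Import GRing.Theory.

(* Formal power series over F_2 = bool (addition = addb/xor, mult = andb). *)
Definition series := nat -> bool.

Definition sone : series := fun n => n == 0.

Definition smul (f g : series) : series :=
  fun n => \big[addb/false]_(i < n.+1) (f i && g (n - i)).

Definition spow (f : series) (k : nat) : series := iter k (smul f) sone.

(* composition f(u(t)), meaningful when u(0) = 0 *)
Definition scomp (f u : series) : series :=
  fun n => \big[addb/false]_(k < n.+1) (f k && spow u k n).

Definition inU (j : nat) (f : series) : Prop :=
  f 0 = true /\ forall k, 0 < k < j -> f k = false.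

Definition E (j : nat) : series := fun n => (n == 0) || (n == j).

Definition nottingham (u : series) : Prop := u 0 = false /\ u 1 = true.

Definition sdivt (u : series) : series := fun n => u n.+1.

(* continuous homomorphism U_1 -> Z/4Z (values outside U_1 are irrelevant) *)
Definition is_character (chi : series -> 'Z_4) : Prop :=
  (forall f g, inU 1 f -> inU 1 g -> chi (smul f g) = (chi f + chi g)%R) /\
  (exists n, forall f, inU n f -> chi f = 0%R).

Definition act (u : series) (chi : series -> 'Z_4) : series -> 'Z_4 :=
  fun f => chi (scomp f u).

(* Main.v *)
Require Import Defs.
From HB Require Import structures.
From mathcomp Require Import all_boot all_order all_algebra.
From mathcomp Require Import zify.
From Stdlib Require Import FunctionalExtensionality.
Import GRing.Theory.
Local Open Scope ring_scope.

Definition bsum (n : nat) (F : nat -> bool) : bool :=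
  foldr (fun i acc => F i (+) acc) false (iota 0 n).
Lemma bsumE n (F : nat -> bool) : \big[addb/false]_(i < n) F i = bsum n F.
Proof. by rewrite -(big_mkord xpredT F) /index_iota subn0 unlock. Qed.

Lemma sum_pick n (F : nat -> bool) j :
  \big[addb/false]_(i < n) (F i && (i == j :> nat)) = (j < n)%N && F j.
Proof.
case: (ltnP j n) => Hj.
  rewrite (bigD1 (Ordinal Hj)) //= eqxx andbT big1 ?addbF // => i neq.
  suff -> : (nat_of_ord i == j) = false by rewrite andbF.
  apply/negbTE; apply: contra neq => /eqP e; apply/eqP/val_inj; exact: e.
by rewrite big1 // => i _; rewrite (ltn_eqF (leq_trans (ltn_ord i) Hj)) andbF.
Qed.

Lemma mulE f k n : (0 < k)%N ->
  smul f (E k) n = f n (+) ((k <= n)%N && f (n - k)%N).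
Proof.
move=> k0; rewrite /smul.
rewrite (eq_bigr (fun i : 'I_n.+1 => (f i && (i == n :> nat)) (+)
                    (((k <= n)%N && f i) && (i == (n - k)%N :> nat)))); last first.
  move=> i _; have := ltn_ord i; rewrite /E => lt.
  case: (f i); case: (n - i == 0)%N / eqP; case: (n - i == k)%N / eqP;
   case: (i == n :> nat) / eqP; case: (k <= n)%N / leP; case: (i == (n - k)%N :> nat) / eqP;
    move=> /= *; by [] || (exfalso; lia).
rewrite (@big_split _ false addb) /= !sum_pick ltnSn /=.
rewrite (sum_pick _ (fun i => (k <= n)%N && f i)); congr addb.
by rewrite ltnS leq_subr.
Qed.

Definition cE (k : nat) : nat :=
  if k == 5%N then 1%N else if k == 10%N then 2%N else if k == 15%N then 2%N else 0%N.

Definition hom (chi : series -> 'Z_4) : Prop :=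
  forall f g, inU 1 f -> inU 1 g -> chi (smul f g) = chi f + chi g.

Lemma E_inU1 k : inU 1 (E k).
Proof. by split => // j; case: j. Qed.

Lemma inU_le {j k f} : (j <= k)%N -> inU k f -> inU j f.
Proof. by move=> jk [h0 h]; split => // i /andP [i0 ij]; apply: h; rewrite i0 /=; exact: leq_trans ij jk. Qed.

Lemma inU_next {k f} : inU k f -> f k = false -> inU k.+1 f.
Proof.
move=> [h0 h] fk; split => // i /andP [i0]; rewrite ltnS leq_eqVlt => /orP [/eqP -> //|ik].
by apply: h; rewrite i0.
Qed.

Lemma inU_step {k f} : (0 < k)%N -> inU k f -> f k = true -> inU k.+1 (smul f (E k)).
Proof.
move=> k0 [h0 h] fk; split; first by rewrite mulE // h0 /=; case: k k0 {h fk}.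
move=> i /andP [i0]; rewrite ltnS leq_eqVlt => /orP [/eqP ->|ik].
  by rewrite mulE // leqnn subnn fk h0.
rewrite mulE // h ?i0 //; case: leP => //; lia.
Qed.

Lemma E2 m : (0 < m)%N -> smul (E m) (E m) = E (m + m).
Proof.
move=> m0; apply: functional_extensionality => n; rewrite mulE // /E.
case: (n == 0)%N / eqP; case: (n == m)%N / eqP; case: (m <= n)%N / leP;
  case: (n - m == 0)%N / eqP; case: (n - m == m)%N / eqP; case: (n == m + m)%N / eqP;
  move=> /= *; by [] || (exfalso; lia).
Qed.

Lemma Z4neg (x : 'Z_4) : - x = 3%:R * x.
Proof. by case: x => [[|[|[|[|m]]]] Hm]; apply/eqP; vm_compute. Qed.

Lemma cE_double m : ((cE (m + m))%:R : 'Z_4) = (cE m)%:R + (cE m)%:R.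
Proof.
have [->|n5] := eqVneq m 5%N; first by apply/eqP; vm_compute.
have [->|n10] := eqVneq m 10%N; first by apply/eqP; vm_compute.
have [->|n15] := eqVneq m 15%N; first by apply/eqP; vm_compute.
rewrite /cE (negbTE n5) (negbTE n10) (negbTE n15).
have -> : (m + m == 5)%N = false by apply/eqP; lia.
have -> : (m + m == 10)%N = false by apply/eqP; lia.
have -> : (m + m == 15)%N = false by apply/eqP; lia.
by rewrite addr0.
Qed.

Lemma KE chi : hom chi ->
  (forall i : nat, odd i ->
     chi (E i) = (nat_of_bool (i == 5%N))%:R + 2 * (nat_of_bool (i == 15%N))%:R) ->
  forall k, (0 < k)%N -> chi (E k) = (cE k)%:R.
Proof.
move=> Hhom Hval k; elim/ltn_ind: k => k IH k0.
case hodd: (odd k).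
  rewrite Hval //.
  have [->|n5] := eqVneq k 5%N; first by apply/eqP; vm_compute.
  have [->|n15] := eqVneq k 15%N; first by apply/eqP; vm_compute.
  have n10 : k != 10%N by apply/eqP => e; rewrite e in hodd.
  by rewrite /cE (negbTE n5) (negbTE n10) (negbTE n15) /= mulr0 addr0.
have km : k = (k./2 + k./2)%N.
  by rewrite addnn -{1}(odd_double_half k) hodd.
have m0 : (0 < k./2)%N by lia.
rewrite km -E2 // Hhom; try exact: E_inU1.
have lt : (k./2 < k)%N by lia.
by rewrite (IH _ lt m0) cE_double.
Qed.

Lemma T16 chi : hom chi -> (exists n, forall f, inU n f -> chi f = 0) ->
  (forall k, (0 < k)%N -> chi (E k) = (cE k)%:R) ->
  forall f, inU 16 f -> chi f = 0.
Proof.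
move=> Hhom [n Hn] HE.
suff: forall d k f, (n - k <= d)%N -> (16 <= k)%N -> inU k f -> chi f = 0.
  by move=> H f; apply: (H n 16%N) => //; lia.
elim=> [|d IH] k f hd h16 hf.
  by apply: Hn; apply: (inU_le _ hf); lia.
case: (leqP n k) => nk; first by apply: Hn; exact: (inU_le nk hf).
case hfk: (f k); last by apply: (IH k.+1) => //; [lia|lia|exact: inU_next].
have k0 : (0 < k)%N by lia.
have := Hhom f (E k) (inU_le k0 hf) (E_inU1 k).
rewrite (IH k.+1) ?HE //; [|lia|lia|exact: inU_step].
have -> : cE k = 0%N.
  rewrite /cE; have -> : (k == 5)%N = false by apply/eqP; lia.
  have -> : (k == 10)%N = false by apply/eqP; lia.
  by have -> : (k == 15)%N = false by apply/eqP; lia.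
by rewrite addr0 => ->.
Qed.

Definition upd (k : nat) (l : seq bool) : seq bool :=
  mkseq (fun n => nth false l n (+) ((k <= n)%N && nth false l (n - k))) 16.

Fixpoint red (fuel k : nat) (l : seq bool) : nat :=
  match fuel with
  | 0 => 0%N
  | fu.+1 => if nth false l k then (red fu k.+1 (upd k l) + 3 * cE k)%N
             else red fu k.+1 l
  end.

Lemma redP chi : hom chi -> (forall k, (0 < k)%N -> chi (E k) = (cE k)%:R) ->
  (forall f, inU 16 f -> chi f = 0) ->
  forall fuel k l f, (fuel + k = 16)%N -> (0 < k)%N -> inU k f ->
  (forall n, (n < 16)%N -> f n = nth false l n) -> chi f = (red fuel k l)%:R.
Proof.
move=> Hhom HE H16; elim=> [|fu IH] k l f hk k0 hf hl /=.
  by apply: H16; rewrite -hk.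
have k16 : (k < 16)%N by lia.
rewrite -(hl k k16); case hfk: (f k); last first.
  by apply: IH; [lia|lia|exact: inU_next|exact: hl].
have := Hhom f (E k) (inU_le k0 hf) (E_inU1 k).
rewrite (IH k.+1 (upd k l) (smul f (E k))) ?HE //; last first.
- move=> n hn; rewrite mulE // /upd nth_mkseq // -!hl //; lia.
- exact: inU_step.
- lia.
move=> e; rewrite natrD natrM e.
by rewrite -Z4neg addrK.
Qed.

Definition u : series := fun n => n \in [:: 1; 4; 5; 10; 12]%N.
Definition ul : seq bool := mkseq u 16.
Definition lmul (a b : seq bool) : seq bool :=
  mkseq (fun n => bsum n.+1 (fun i => nth false a i && nth false b (n - i))) 16.
Definition lone : seq bool := mkseq (fun n => n == 0%N) 16.
Definition lpow (k : nat) : seq bool := iter k (lmul ul) lone.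
Definition Lcomp (f : series) : seq bool :=
  mkseq (fun n => bsum n.+1 (fun k => f k && nth false (lpow k) n)) 16.
Definition Ld : seq bool := mkseq (fun n => u n.+1) 16.

Lemma spow_ok k n : (n < 16)%N -> spow u k n = nth false (lpow k) n.
Proof.
elim: k n => [|k IH] n hn; first by rewrite /lpow /= /lone nth_mkseq.
rewrite /lpow iterS -/(lpow k) /lmul nth_mkseq // -bsumE.
rewrite [spow _ _]/spow iterS -/(spow u k) /smul.
apply: eq_bigr => i _; have := ltn_ord i => hi.
rewrite IH /ul ?nth_mkseq //; lia.
Qed.

Lemma scomp_ok f n : (n < 16)%N -> scomp f u n = nth false (Lcomp f) n.
Proof.
move=> hn; rewrite /Lcomp nth_mkseq // -bsumE /scomp.
apply: eq_bigr => i _; by rewrite spow_ok.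
Qed.

Definition rhs (i : nat) : 'Z_4 :=
  (nat_of_bool (i == 5%N))%:R
  + 2 * (nat_of_bool ((10 <= i <= 15)%N && ((i == 11%N) || (i == 15%N))))%:R.

Lemma table : all (fun i => ~~ odd i ||
   (val ((red 15 1 (Lcomp (E i)))%:R : 'Z_4) == val (rhs i))) (iota 0 16).
Proof. vm_compute. reflexivity. Qed.

Lemma tabled : ((red 15 1 Ld)%:R : 'Z_4) = 0.
Proof. apply: val_inj; vm_compute. reflexivity. Qed.
Lemma table0 : ((red 15 1 (Lcomp (E 0)))%:R : 'Z_4) = 0.
Proof. apply: val_inj; vm_compute. reflexivity. Qed.

Theorem mainTheorem9 (chi : series -> 'Z_4)
  (Hchar : is_character chi)
  (Hval : forall i : nat, odd i ->
     chi (E i) = (nat_of_bool (i == 5%N))%:R + 2 * (nat_of_bool (i == 15%N))%:R) :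
  exists u : series,
    nottingham u /\ chi (sdivt u) = 0 /\
    exists b : nat -> bool,
      b 15%N = true /\
      (forall i : nat, odd i ->
         act u chi (E i) =
           (nat_of_bool (i == 5%N))%:R
           + 2 * (nat_of_bool ((10 <= i <= 15)%N && b i))%:R) /\
      act u chi (E 11) = 2 /\
      act u chi <> chi.
Proof.
case: Hchar => Hhom Hcont.
have HE := @KE chi Hhom Hval.
have H16 := @T16 chi Hhom Hcont HE.
have R := @redP chi Hhom HE H16.
have Hvals : forall i, odd i -> act u chi (E i) = rhs i.
  move=> i oi; rewrite /act.
  have in1 : inU 1 (scomp (E i) u).
    by split => [|j /andP [j0 j1]]; [rewrite /scomp big_ord1|lia].
  case: (ltnP i 16) => hi.
    rewrite (R 15 1 (Lcomp (E i))) //; last by move=> n hn; rewrite scomp_ok.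
    apply: val_inj; apply/eqP.
    have := allP table i; rewrite mem_iota add0n => /(_ hi).
    by rewrite oi.
  rewrite (R 15 1 (Lcomp (E 0))) // ?table0; last first.
    move=> n hn; rewrite -scomp_ok //; apply: eq_bigr => k _.
    have := ltn_ord k => hk; rewrite /E.
    have -> : (k == i :> nat) = false by apply/eqP; lia.
    by case: (_ == _).
  rewrite /rhs.
  have -> : (i == 5)%N = false by apply/eqP; lia.
  have -> : (10 <= i <= 15)%N = false by apply/negbTE; rewrite negb_and -!ltnNge; lia.
  by rewrite /= mulr0 addr0.
exists u; split; first by [].
split.
  rewrite (R 15 1 Ld) ?tabled //.
    by split => [|j /andP [j0 j1]]; [|lia].
  by move=> n hn; rewrite /Ld nth_mkseq.
exists (fun i => (i == 11%N) || (i == 15%N)); split => //.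
split; first exact: Hvals.
have h11 : act u chi (E 11) = 2 by rewrite Hvals //; apply: val_inj.
split => // e.
have := Hval 11 isT; rewrite -e h11 => /(congr1 val).
by [].
Qed.
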